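(* For every even integer $n\ge 4$, $\chi_{ei}(C_3\square C_n)=6$.
   Context: All graphs are finite and simple. $C_k$ denotes the cycle on $k$ vertices. A path $P_4$ in $G$ is a sequence $uxyv$ of four distinct vertices with $ux,xy,yv\in E(G)$; $u,v$ are its end vertices. An $e$-injective $k$-coloring of $G$ is a function $f:V(G)\to\{1,\dots,k\}$ with $f(u)\ne f(v)$ whenever $u,v$ are the end vertices of some path $P_4$ in $G$; $\chi_{ei}(G)$ is the least such $k$. In the Cartesian product $G\square H$ two vertices are adjacent if they are adjacent in one coordinate and equal in the other. *)

(* Defs.v *)
From mathcomp Require Import all_boot.
Set Implicit Arguments. Unset Strict Implicit. Unset Printing Implicit Defensive.

(* A finite simple graph is given by a vertex finType T and an adjacency
   relation e : rel T (symmetric and irreflexive; see the lemmas below for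
   the graphs used in the statement). *)

Definition P4_ends (T : finType) (e : rel T) (u v : T) : Prop :=
  exists x y : T, [/\ uniq [:: u; x; y; v], e u x, e x y & e y v].

(* e-injective k-coloring: colours {1..k} represented by 'I_k. *)
Definition e_injective (T : finType) (e : rel T) (k : nat) (f : T -> 'I_k) : Prop :=
  forall u v : T, P4_ends e u v -> f u <> f v.

Definition ei_colorable (T : finType) (e : rel T) (k : nat) : Prop :=
  exists f : T -> 'I_k, e_injective e f.

Definition chi_ei_is (T : finType) (e : rel T) (k : nat) : Prop :=
  ei_colorable e k /\ forall k', ei_colorable e k' -> k <= k'.

(* Cycle C_m on vertices 'I_m (simple for m >= 3): i ~ j iff j = i+1 or i = j+1 mod m. *)
Definition cycle_adj (m : nat) : rel 'I_m :=
  fun i j => (j == (i.+1 %% m) :> nat) || (i == (j.+1 %% m) :> nat).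

Arguments cycle_adj : clear implicits.

Definition box_adj (A B : finType) (ra : rel A) (rb : rel B) : rel (A * B) :=
  fun p q => (ra p.1 q.1 && (p.2 == q.2)) || ((p.1 == q.1) && rb p.2 q.2).

Lemma cycle_adj_sym m : symmetric (cycle_adj m).
Proof. by move=> i j; rewrite /cycle_adj orbC. Qed.

Lemma cycle_adj_irr m : 2 < m -> irreflexive (cycle_adj m).
Proof.
move=> hm i; rewrite /cycle_adj orbb; apply/negP => /eqP h.
have hi := ltn_ord i.
case: (ltnP i.+1 m) => h1.
  by move: h; rewrite modn_small // => /n_Sn.
have e : i.+1 = m by apply/eqP; rewrite eqn_leq h1 hi.
by move: h; rewrite e modnn => h0; rewrite h0 in e; rewrite -e in hm.
Qed.

Lemma box_adj_sym (A B : finType) (ra : rel A) (rb : rel B) :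
  symmetric ra -> symmetric rb -> symmetric (box_adj ra rb).
Proof. by move=> sa sb p q; rewrite /box_adj sa sb [p.2 == _]eq_sym [p.1 == _]eq_sym. Qed.

Lemma box_adj_irr (A B : finType) (ra : rel A) (rb : rel B) :
  irreflexive ra -> irreflexive rb -> irreflexive (box_adj ra rb).
Proof. by move=> ia ib p; rewrite /box_adj ia ib !andbF. Qed.

(* Main.v *)
Require Import Defs.
From mathcomp Require Import all_boot.
From mathcomp Require Import zify.

Lemma no4in3 (a b c d : 'I_3) : uniq [:: a; b; c; d] -> False.
Proof.
move/card_uniqP => h; have := max_card (mem [:: a; b; c; d]).
by rewrite h card_ord.
Qed.

Lemma cyc_par n (i j : 'I_n) : ~~ odd n -> cycle_adj n i j -> odd i = ~~ odd j.
Proof.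
move=> hn.
have key : forall a b : 'I_n, (b : nat) = (a.+1 %% n) -> odd a = ~~ odd b.
  move=> a b h; have ha := ltn_ord a.
  case: (ltnP a.+1 n) => h1.
    by rewrite h modn_small //= negbK.
  have e : a.+1 = n by lia.
  rewrite h e modnn /=.
  have : odd a.+1 = odd n by rewrite e.
  by move: hn => /negbTE ->; rewrite /= => /negbFE.
by case/orP => /eqP h; [apply: key | rewrite (key _ _ h) negbK].
Qed.

Lemma cyc_neq m (i j : 'I_m) : 2 < m -> cycle_adj m i j -> i != j.
Proof.
move=> hm h; apply/eqP => e; subst.
by have := cycle_adj_irr hm j; rewrite h.
Qed.

Section S.
Variable n : nat.
Hypothesis hn : ~~ odd n.
Let e := box_adj (cycle_adj 3) (cycle_adj n).

Lemma edge_cases (p q : 'I_3 * 'I_n) : e p q ->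
  (p.1 != q.1 /\ p.2 = q.2) \/ (p.1 = q.1 /\ odd p.2 = ~~ odd q.2).
Proof.
case/orP => /andP [h1 h2].
  by left; split; [apply: cyc_neq | apply/eqP].
by right; split; [apply/eqP | apply: cyc_par].
Qed.

Lemma main_lem u x y v : uniq [:: u; x; y; v] -> e u x -> e x y -> e y v ->
  odd u.2 = odd v.2 -> u.1 <> v.1.
Proof.
move=> U /edge_cases [[a1 a2]|[a1 a2]] /edge_cases [[b1 b2]|[b1 b2]]
  /edge_cases [[c1 c2]|[c1 c2]] P; try (move: P; rewrite ?a2 ?b2 ?c2; by case: (odd _)).
- exfalso; destruct u as [u1 u2], x as [x1 x2], y as [y1 y2], v as [v1 v2];
  rewrite /= in a2 b2 c2; subst; move: U.
  have -> : [:: (u1, v2); (x1, v2); (y1, v2); (v1, v2)] =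
    map (fun a => (a, v2)) [:: u1; x1; y1; v1] by [].
  rewrite map_inj_uniq; first exact: no4in3.
  by move=> ? ? [].
- by move=> E; move: a1; rewrite E b1 c1 eqxx.
- by move=> E; move: b1; rewrite -a1 c1 E eqxx.
- by move=> E; move: c1; rewrite -b1 -a1 E eqxx.
Qed.

Lemma col_lt (p : 'I_3 * 'I_n) : p.1 + 3 * odd p.2 < 6.
Proof. by have := ltn_ord p.1; case: (odd _) => /=; lia. Qed.

Lemma col_inj (a b : 'I_3) (c d : bool) : a + 3 * c = b + 3 * d -> a = b /\ c = d.
Proof.
move=> E; have ha := ltn_ord a; have hb := ltn_ord b.
have [h1 h2] : (a : nat) = b /\ c = d by case: c d E => [] [] /=; lia.
by split => //; apply: val_inj.
Qed.

Lemma upper : ei_colorable e 6.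
Proof.
exists (fun p => Ordinal (col_lt p)) => u v [x [y [U h1 h2 h3]]] /(congr1 val) /=.
move/col_inj => [E1 E2].
exact: (@main_lem u x y v U h1 h2 h3).
Qed.
End S.

Lemma lower m k : ei_colorable (box_adj (cycle_adj 3) (cycle_adj m.+4)) k -> 6 <= k.
Proof.
case=> f H.
pose r0 : 'I_3 := @Ordinal 3 0 isT.
pose r1 : 'I_3 := @Ordinal 3 1 isT.
pose r2 : 'I_3 := @Ordinal 3 2 isT.
pose c0 : 'I_m.+4 := @Ordinal m.+4 0 isT.
pose c1 : 'I_m.+4 := @Ordinal m.+4 1 isT.
pose L := [:: (r0, c0); (r1, c0); (r2, c0); (r0, c1); (r1, c1); (r2, c1)].
have H' : forall u v, P4_ends (box_adj (cycle_adj 3) (cycle_adj m.+4)) u v -> f u != f v.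
  by move=> u v /H /eqP.
have U : uniq (map f L).
  rewrite /= !inE !negb_or.
  repeat (apply/andP; split) => //; apply: H';
  first [ (exists (r0,c0), (r1,c0); by split) | (exists (r0,c0), (r2,c0); by split) | (exists (r0,c0), (r0,c1); by split) | (exists (r0,c0), (r1,c1); by split) | (exists (r0,c0), (r2,c1); by split) | (exists (r1,c0), (r0,c0); by split) | (exists (r1,c0), (r2,c0); by split) | (exists (r1,c0), (r0,c1); by split) | (exists (r1,c0), (r1,c1); by split) | (exists (r1,c0), (r2,c1); by split) | (exists (r2,c0), (r0,c0); by split) | (exists (r2,c0), (r1,c0); by split) | (exists (r2,c0), (r0,c1); by split) | (exists (r2,c0), (r1,c1); by split) | (exists (r2,c0), (r2,c1); by split) | (exists (r0,c1), (r0,c0); by split) | (exists (r0,c1), (r1,c0); by split) | (exists (r0,c1), (r2,c0); by split) | (exists (r0,c1), (r1,c1); by split) | (exists (r0,c1), (r2,c1); by split) | (exists (r1,c1), (r0,c0); by split) | (exists (r1,c1), (r1,c0); by split) | (exists (r1,c1), (r2,c0); by split) | (exists (r1,c1), (r0,c1); by split) | (exists (r1,c1), (r2,c1); by split) | (exists (r2,c1), (r0,c0); by split) | (exists (r2,c1), (r1,c0); by split) | (exists (r2,c1), (r2,c0); by split) | (exists (r2,c1), (r0,c1); by split) | (exists (r2,c1), (r1,c1); by split) ].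
have := max_card (mem (map f L)).
by rewrite (card_uniqP U) card_ord size_map.
Qed.

Theorem theorem4p6 (n : nat) :
  4 <= n -> ~~ odd n ->
  chi_ei_is (box_adj (cycle_adj 3) (cycle_adj n)) 6.
Proof.
move=> h4 hn; split; first exact: upper.
move=> k; case: n h4 hn => [|[|[|[|m]]]] // _ _; exact: lower.
Qed.
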